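(* Let $a_1,\dots,a_n\in\overline K$ ($n\ge2$) be pairwise distinct, let $A$ be the associated magic matrix and $(\mathcal R,\gamma)$ the associated tree. Then $A=\sum_{T\in\mathcal R}\gamma(T)A(T)$.
   Context: $\overline{K}=\bigcup_{d\ge1}\mathbf{C}[[x^{1/d}]][1/x]$ with valuation $\nu$. $m_{i,j}=\nu(a_i-a_j)$, $m_i=\sum_{j\ne i}m_{i,j}$; $A$ has entries $-m_{i,j}$ off the diagonal and $m_i$ on the diagonal. $T_0=\{1,\dots,n\}$; a ''rameau'' is $T\subset T_0$ with $|T|\ge2$ such that $m_{i,j}>m_{i,k}=m_{j,k}$ for all $i\ne j$ in $T$ and $k\notin T$; $\mathcal R$ is the set of rameaux. $\alpha(T)=\inf\{m_{i,j}:i\ne j\in T\}$; $\gamma(T_0)=\alpha(T_0)$ and, for $T\neq T_0$, $\gamma(T)=\alpha(T)-\alpha(T')$ with $T'$ the smallest element of $\mathcal R$ strictly containing $T$. For $T\subset T_0$ of cardinality $n(T)\ge2$, $A(T)=(\alpha_{i,j})$ with $\alpha_{i,j}=-1$ if $i\ne j$ and $\{i,j\}\subset T$, $\alpha_{i,i}=n(T)-1$ if $i\in T$, and $0$ otherwise. *)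

(* Defs.v *)
From HB Require Import structures.
From mathcomp Require Import all_boot all_order all_algebra.
From mathcomp Require Import boolp.
From mathcomp Require Import Rstruct.
From mathcomp Require Import complex.
From Stdlib Require Rdefinitions.
Set Implicit Arguments.
Unset Strict Implicit.
Unset Printing Implicit Defensive.
Import Order.TTheory GRing.Theory Num.Theory.
Local Open Scope ring_scope.

Definition Cplx : Type := complex Rdefinitions.R.

(* An element of Kbar = \bigcup_d C[[x^{1/d}]][1/x], represented as
   x^(pshift / d) * \sum_(k >= 0) pcoef k * x^(k / d), with d = (pden).+1 >= 1. *)
Record puiseux := Puiseux {
  pden : nat;          (* d - 1 *)
  pshift : int;
  pcoef : nat -> Cplx }.

Definition pd (f : puiseux) : nat := (pden f).+1.

Definition psub (f g : puiseux) : puiseux :=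
  let df := pd f in let dg := pd g in
  let kf := pshift f * (dg%:Z) in let kg := pshift g * (df%:Z) in
  let k := Num.min kf kg in
  let sf := absz (kf - k) in let sg := absz (kg - k) in
  let cf n := if leq sf n && dvdn dg (n - sf)%N then pcoef f ((n - sf) %/ dg) else 0 in
  let cg n := if leq sg n && dvdn df (n - sg)%N then pcoef g ((n - sg) %/ df) else 0 in
  Puiseux (df * dg).-1 k (fun n => cf n - cg n).

Definition pzero (f : puiseux) : Prop := forall k, pcoef f k = 0.

(* the x-adic valuation nu : Kbar^* -> Q (value 0 is a dummy for f = 0) *)
Definition pval (f : puiseux) : rat :=
  match pselect (exists k, pcoef f k != 0) with
  | left h => ((pshift f + (ex_minn h)%:Z)%:~R) / (pd f)%:R
  | right _ => 0
  end.

Section Tree.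
Variables (n : nat) (a : 'I_n -> puiseux).

Definition mm (i j : 'I_n) : rat := pval (psub (a i) (a j)).
Definition mrow (i : 'I_n) : rat := \sum_(j | j != i) mm i j.

Definition magic : 'M[rat]_n :=
  \matrix_(i, j) (if i == j then mrow i else - mm i j).

Definition rameau (T : {set 'I_n}) : bool :=
  (2 <= #|T|)%N &&
  [forall i in T, forall j in T, forall k in ~: T,
     (i != j) ==> ((mm i j > mm i k) && (mm i k == mm j k))].

Definition alpha (T : {set 'I_n}) : rat :=
  let s := [seq mm p.1 p.2 | p <- enum [set p : 'I_n * 'I_n |
                 (p.1 \in T) && (p.2 \in T) && (p.1 != p.2)]] in
  \big[Num.min/head 0 s]_(x <- s) x.

(* the smallest rameau strictly containing T (setT by default) *)
Definition parent (T : {set 'I_n}) : {set 'I_n} :=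
  match [pick U | rameau U && (T \proper U) &&
           [forall V, (rameau V && (T \proper V)) ==> (U \subset V)]] with
  | Some U => U
  | None => setT
  end.

Definition gamma (T : {set 'I_n}) : rat :=
  if T == setT then alpha T else alpha T - alpha (parent T).

Definition AT (T : {set 'I_n}) : 'M[rat]_n :=
  \matrix_(i, j) (if (i \in T) && (j \in T) then
                    (if i == j then (#|T|%:R - 1) else -1) else 0).

End Tree.

(* Main.v *)
Require Import Defs.
From HB Require Import structures.
From mathcomp Require Import all_boot all_order all_algebra.
Import GRing.Theory Num.Theory.
Local Open Scope ring_scope.
From mathcomp Require Import boolp Rstruct complex.
Import Order.TTheory GRing.Theory Num.Theory.

Definition coef (f : puiseux) (q : rat) : Cplx :=
  let t := q * (pd f)%:R - (pshift f)%:~R in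
  if t \is a Num.nat then pcoef f (Num.truncn t) else 0.

Lemma shift_lemma (c : nat -> Cplx) (d s : nat) (tf t : rat) :
  (0 < d)%N -> t = d%:R * tf + s%:R ->
  (if t \is a Num.nat then
     (if leq s (Num.truncn t) && dvdn d (Num.truncn t - s)%N
      then c ((Num.truncn t - s) %/ d)%N else 0) else 0)
  = (if tf \is a Num.nat then c (Num.truncn tf) else 0).
Proof.
move=> d0 ->.
case: (boolP (tf \is a Num.nat)) => [/natrP[m ->]|ntf].
  rewrite -natrM -natrD !natr_nat !natrK leq_addl addnK dvdn_mulr //.
  by rewrite mulKn.
case: ifP => // /natrP[N hN].
rewrite hN natrK; case: ifP => // /andP[hs /dvdnP[k hk]].
exfalso; move/negP: ntf; apply.
have: d%:R * tf = d%:R * (k%:R : rat).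
  have e: N = (k * d + s)%N by rewrite -hk subnK.
  move: hN; rewrite e natrD natrM => /addIr ->; by rewrite mulrC.
have dn0 : (d%:R : rat) != 0 by rewrite pnatr_eq0 -lt0n.
by move/(mulfI dn0) => ->; apply: natr_nat.
Qed.

From mathcomp Require Import ring.

Lemma if_sub (b : bool) (x y : Cplx) :
  (if b then x - y else 0) = (if b then x else 0) - (if b then y else 0).
Proof. by case: b; rewrite ?subr0. Qed.

Lemma shift_id (q : rat) (df dg : nat) (sf k : int) :
  k <= sf * dg%:Z ->
  q * (df * dg)%:R - k%:~R =
  dg%:R * (q * df%:R - sf%:~R) + (absz (sf * dg%:Z - k)%R)%:R.
Proof.
move=> hk.
have -> : ((absz (sf * dg%:Z - k)%R)%:R : rat) = (sf * dg%:Z - k)%:~R.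
  have h : 0 <= sf * dg%:Z - k by rewrite subr_ge0.
  by rewrite -{2}(gez0_abs h).
rewrite intrB intrM natrM /=.
have -> : ((dg%:Z)%:~R : rat) = dg%:R by [].
ring.
Qed.

Lemma pd_psub f g : pd (psub f g) = (pd f * pd g)%N.
Proof. rewrite [LHS]/pd /psub; cbn [pden]. by rewrite prednK // muln_gt0. Qed.

Lemma coef_psub f g q : coef (psub f g) q = coef f q - coef g q.
Proof.
rewrite /coef pd_psub /psub; cbn [pshift pcoef].
rewrite if_sub.
congr (_ - _).
  apply: shift_lemma => //. apply: shift_id; by rewrite ge_min lexx.
rewrite mulnC; apply: shift_lemma => //.
apply: shift_id; by rewrite ge_min lexx orbT.
Qed.

Lemma pd_neq0 f : ((pd f)%:R : rat) != 0.
Proof. by rewrite pnatr_eq0. Qed.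

Lemma coef_val_le f q : coef f q != 0 -> pval f <= q.
Proof.
rewrite /coef; case: ifP => [/natrP[m hm]|]; last by rewrite eqxx.
rewrite hm natrK => hm0.
rewrite /pval; case: pselect => [h|h]; last by exfalso; apply h; exists m.
case: (ex_minnP h) => m0 _ hmin.
have lem : (m0 <= m)%N by apply: hmin.
rewrite ler_pdivrMr ?ltr0n //.
have -> : q * (pd f)%:R = (pshift f)%:~R + m%:R by rewrite -hm addrC subrK.
by rewrite intrD lerD2l ler_nat.
Qed.

Lemma coef_val f : ~ pzero f -> coef f (pval f) != 0.
Proof.
move=> nz; rewrite /pval; case: pselect => [h|h]; last first.
  by exfalso; apply: nz => k; case: (eqVneq (pcoef f k) 0) => // hk; exfalso; apply: h; exists k.
case: (ex_minnP h) => m0 hm0 _.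
rewrite /coef mulfVK ?pd_neq0 // intrD [(pshift f)%:~R + _]addrC addrK.
have -> : ((m0%:Z)%:~R : rat) = m0%:R by [].
by rewrite natr_nat natrK.
Qed.

Lemma coef_nz f q : coef f q != 0 -> ~ pzero f.
Proof.
rewrite /coef; case: ifP => _; last by rewrite eqxx.
by move=> h hz; move: h; rewrite hz eqxx.
Qed.

Import Order.TTheory.
Set Implicit Arguments.
Unset Strict Implicit.

Definition distinctp n (a : 'I_n -> puiseux) :=
  forall i j : 'I_n, i != j -> ~ pzero (psub (a i) (a j)).

Lemma mm_sym n (a : 'I_n -> puiseux) : distinctp a ->
  forall i j, mm a i j = mm a j i.
Proof.
move=> hd i j; case: (eqVneq i j) => [->//|ij].
have ji : j != i by rewrite eq_sym.
apply/eqP; rewrite eq_le; apply/andP; split; rewrite /mm; apply: coef_val_le.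
  rewrite coef_psub -opprB -coef_psub oppr_eq0; exact: coef_val _ (hd _ _ ji).
rewrite coef_psub -opprB -coef_psub oppr_eq0; exact: coef_val _ (hd _ _ ij).
Qed.

Lemma mm_ultra n (a : 'I_n -> puiseux) : distinctp a ->
  forall i j k, i != k -> mm a i j <= mm a i k \/ mm a j k <= mm a i k.
Proof.
move=> hd i j k ik; rewrite /mm.
have := coef_val _ (hd _ _ ik); set u := pval _.
rewrite coef_psub.
have -> : coef (a i) u - coef (a k) u =
   (coef (a i) u - coef (a j) u) + (coef (a j) u - coef (a k) u).
  by rewrite addrA subrK.
rewrite -!coef_psub.
case: (eqVneq (coef (psub (a i) (a j)) u) 0) => h1.
  rewrite h1 add0r => h2; right; exact: coef_val_le.
by move=> _; left; exact: coef_val_le.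
Qed.


Lemma rameauP n (a : 'I_n -> puiseux) (T : {set 'I_n}) : rameau a T ->
  forall i j k, i \in T -> j \in T -> k \notin T -> i != j ->
  mm a i k < mm a i j /\ mm a i k = mm a j k.
Proof.
move=> /andP[_ /forall_inP H] i j k iT jT kT ij.
move: (H i iT) => /forall_inP/(_ j jT)/forall_inP.
have kT' : k \in ~: T by rewrite in_setC.
move/(_ k kT')/implyP/(_ ij)/andP => [h1 /eqP h2]; by split.
Qed.

Lemma rameauI n (a : 'I_n -> puiseux) (T : {set 'I_n}) : (2 <= #|T|)%N ->
  (forall i j k, i \in T -> j \in T -> k \notin T -> i != j ->
  mm a i k < mm a i j /\ mm a i k = mm a j k) -> rameau a T.
Proof.
move=> hc H; apply/andP; split => //.
apply/forall_inP => i iT; apply/forall_inP => j jT; apply/forall_inP => k.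
rewrite in_setC => kT; apply/implyP => ij.
have [h1 h2] := H i j k iT jT kT ij; by rewrite h1 h2 eqxx.
Qed.

Lemma laminar n (a : 'I_n -> puiseux) (U V : {set 'I_n}) t : rameau a U -> rameau a V ->
  t \in U -> t \in V -> (U \subset V) || (V \subset U).
Proof.
move=> rU rV tU tV; case: (boolP (U \subset V)) => //= /subsetPn [x xU xV].
apply/subsetP => y yV; apply/negPn/negP => yU.
have tx : t != x by apply: contraNneq xV => <-.
have ty : t != y by apply: contraNneq yU => <-.
have [h1 _] := rameauP rU tU xU yU tx.
have [h2 _] := rameauP rV tV yV xV ty.
by have := lt_trans h1 h2; rewrite ltxx.
Qed.

Lemma parent_spec n (a : 'I_n -> puiseux) (T : {set 'I_n}) : rameau a T -> T != setT ->
  [/\ rameau a (parent a T), T \proper parent a T &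
     forall V, rameau a V -> T \proper V -> parent a T \subset V].
Proof.
move=> rT nT.
have c2 : (2 <= #|T|)%N by case/andP: rT.
have [t tT] : exists t, t \in T.
  by apply/set0Pn; rewrite -card_gt0; apply: leq_trans c2.
have rS : rameau a setT.
  apply: rameauI => [|i j k _ _]; last by rewrite in_setT.
  by apply: leq_trans c2 _; apply: subset_leq_card; apply: subsetT.
have Ps : rameau a setT && (T \proper setT) by rewrite rS properT.
have hex : exists U, rameau a U && (T \proper U) &&
    [forall V, (rameau a V && (T \proper V)) ==> (U \subset V)].
  case: (@arg_minnP _ setT (fun V : {set 'I_n} => rameau a V && (T \proper V)) (fun V : {set 'I_n} => #|V|) Ps) => U hU hmin.
  exists U; rewrite hU /=; apply/forallP => V; apply/implyP => hV.
  case/andP: hU => rU TU; case/andP: (hV) => rV TV.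
  have tU : t \in U by apply: (subsetP (proper_sub TU)).
  have tV : t \in V by apply: (subsetP (proper_sub TV)).
  case/orP: (laminar rU rV tU tV) => // VU.
  have hUV := hmin V hV.
  have [_ <-] := subset_leqif_card VU.
  by rewrite eqn_leq hUV (subset_leq_card VU).
rewrite /parent; case: pickP => [U /andP[/andP[rU TU] /forallP hU] | nope].
  split => // V rV TV; exact: (implyP (hU V) (introT andP (conj rV TV))).
by exfalso; case: hex => U; rewrite nope.
Qed.

Lemma sum_above_setT n (a : 'I_n -> puiseux) : rameau a setT ->
  \sum_(U | rameau a U && (setT \subset U)) gamma a U = alpha a setT.
Proof.
move=> rS; rewrite (big_pred1 setT); first by rewrite /gamma eqxx.
move=> U /=; rewrite subTset; case: eqP => [->|]; by rewrite ?rS ?andbF.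
Qed.

Lemma sum_above n (a : 'I_n -> puiseux) (T : {set 'I_n}) : rameau a T ->
  \sum_(U | rameau a U && (T \subset U)) gamma a U = alpha a T.
Proof.
move: {2}#|~: T| (leqnn #|~: T|) => k; elim: k T => [|k IH] T hk rT;
  (case: (eqVneq T setT) rT => [->|nT] rT; first exact: sum_above_setT).
  exfalso; move: hk; rewrite leqn0 => /eqP/cards0_eq h.
  by move/eqP: nT; apply; rewrite -[T]setCK h setC0.
have [rP TP Pmin] := parent_spec rT nT.
set P := parent a T in rP TP Pmin *.
rewrite (bigD1 T) /=; last by rewrite rT subxx.
have -> : \sum_(U | (rameau a U && (T \subset U)) && (U != T)) gamma a U =
          \sum_(U | rameau a U && (P \subset U)) gamma a U.
  apply: eq_bigl => U; case: (boolP (rameau a U)) => rU //=.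
  rewrite andbC eq_sym -properEneq.
  apply/idP/idP => [TU|PU]; first exact: Pmin.
  exact: proper_sub_trans TP PU.
rewrite IH //; last first.
  rewrite -ltnS; apply: leq_trans hk; apply: proper_card; by rewrite properC.
by rewrite /gamma (negPf nT) subrK.
Qed.

Lemma bigmin_le (s : seq rat) x0 x : x \in s ->
  \big[Num.min/x0]_(y <- s) y <= x.
Proof.
elim: s => [//|y s IH]; rewrite inE big_cons => /orP[/eqP ->|xs].
  by rewrite ge_min lexx.
by rewrite ge_min IH ?orbT.
Qed.

Lemma bigmin_in (s : seq rat) x0 : \big[Num.min/x0]_(y <- s) y \in x0 :: s.
Proof.
elim: s => [|y s IH]; first by rewrite big_nil inE eqxx.
rewrite big_cons; case: (leP y (\big[Num.min/x0]_(y <- s) y)) => h.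
  by rewrite !inE eqxx orbT.
by move: IH; rewrite !inE => /orP[->//|->]; rewrite !orbT.
Qed.

Definition ball n (a : 'I_n -> puiseux) (i j : 'I_n) : {set 'I_n} :=
  [set k | (k == i) || (mm a i j <= mm a i k)].

Lemma ball_out n (a : 'I_n -> puiseux) i j k : k \notin ball a i j ->
  k != i /\ mm a i k < mm a i j.
Proof. by rewrite inE negb_or -ltNge => /andP[]. Qed.

Lemma ball_in_out n (a : 'I_n -> puiseux) : distinctp a -> forall i j x k,
  x \in ball a i j -> k \notin ball a i j -> mm a x k = mm a i k.
Proof.
move=> hd i j x k xB /ball_out [ki hk].
move: xB; rewrite inE => /orP[/eqP xi|hx]; first by subst x.
have xk : x != k.
  by apply/eqP => e; subst x; move: hk; rewrite ltNge hx.
have ik : i != k by rewrite eq_sym.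
have hix : mm a i k < mm a i x by apply: lt_le_trans hk hx.
apply/eqP; rewrite eq_le; apply/andP; split.
  case: (mm_ultra hd x ik) => // h.
  by move: hix; rewrite ltNge h.
case: (mm_ultra hd i xk) => // h.
by rewrite (mm_sym hd) in h; apply: ltW; apply: lt_le_trans h.
Qed.

Lemma ball_pair n (a : 'I_n -> puiseux) : distinctp a -> forall i j x y,
  x \in ball a i j -> y \in ball a i j -> x != y -> mm a i j <= mm a x y.
Proof.
move=> hd i j x y; rewrite !inE => hxB hyB xy.
have [xi|xi] := eqVneq x i.
  subst x; have [yi|yi] := eqVneq y i; first by subst y; rewrite eqxx in xy.
  by move: hyB; rewrite (negPf yi).
move: hxB; rewrite (negPf xi) /= => hx.
have [yi|yi] := eqVneq y i; first by subst y; rewrite [mm a x i](mm_sym hd).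
move: hyB; rewrite (negPf yi) /= => hy.
case: (mm_ultra hd i xy) => h; last exact: le_trans hy h.
by rewrite [mm a x i](mm_sym hd) in h; exact: le_trans hx h.
Qed.

Lemma ball_rameau n (a : 'I_n -> puiseux) : distinctp a -> forall i j,
  i != j -> rameau a (ball a i j).
Proof.
move=> hd i j ij.
have iB : i \in ball a i j by rewrite inE eqxx.
have jB : j \in ball a i j by rewrite inE lexx orbT.
apply: rameauI.
  have <- : #|[set i; j]| = 2%N by rewrite cards2 ij.
  apply: subset_leq_card; apply/subsetP => x; rewrite !inE => /orP[]/eqP ->;
    by rewrite ?eqxx ?lexx ?orbT.
move=> x y k xB yB kB xy.
have [_ hk] := ball_out kB.
rewrite (ball_in_out hd xB kB) (ball_in_out hd yB kB); split => //.
exact: lt_le_trans hk (ball_pair hd xB yB xy).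
Qed.

Lemma ball_alpha n (a : 'I_n -> puiseux) : distinctp a -> forall i j,
  i != j -> alpha a (ball a i j) = mm a i j.
Proof.
move=> hd i j ij.
have iB : i \in ball a i j by rewrite inE eqxx.
have jB : j \in ball a i j by rewrite inE lexx orbT.
rewrite /alpha.
set S := [set p : 'I_n * 'I_n | _].
set s := [seq mm a p.1 p.2 | p <- enum S].
have ijs : mm a i j \in s.
  by apply: (map_f (fun p : 'I_n * 'I_n => mm a p.1 p.2) (x := (i, j))); rewrite mem_enum inE iB jB ij.
apply/eqP; rewrite eq_le bigmin_le //=.
have : \big[Num.min/head 0 s]_(x <- s) x \in s.
  have := bigmin_in s (head 0 s); rewrite inE => /orP[/eqP ->|//].
  by case: s ijs => //= z s' _; rewrite inE eqxx.
case/mapP => p; rewrite mem_enum inE => /andP[/andP[p1 p2] p12] ->.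
exact: (ball_pair (a:=a) hd p1 p2 p12).
Qed.

Lemma ball_sub n (a : 'I_n -> puiseux) : distinctp a -> forall i j T,
  i != j -> rameau a T -> ((i \in T) && (j \in T)) = (ball a i j \subset T).
Proof.
move=> hd i j T ij rT.
have iB : i \in ball a i j by rewrite inE eqxx.
have jB : j \in ball a i j by rewrite inE lexx orbT.
apply/idP/idP => [/andP[iT jT]|/subsetP h]; last by rewrite !h.
apply/subsetP => k kB; apply/negPn/negP => kT.
have [h _] := rameauP rT iT jT kT ij.
move: kB; rewrite inE => /orP[/eqP e|]; first by move: kT; rewrite e iT.
by rewrite leNgt h.
Qed.

Lemma pair_sum n (a : 'I_n -> puiseux) : distinctp a -> forall i j,
  i != j -> \sum_(T | rameau a T && ((i \in T) && (j \in T))) gamma a T = mm a i j.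
Proof.
move=> hd i j ij.
rewrite -(ball_alpha hd ij) -(sum_above (ball_rameau hd ij)).
apply: eq_bigl => T; case: (boolP (rameau a T)) => //= rT.
exact: ball_sub.
Qed.

Lemma diag_term n (a : 'I_n -> puiseux) (T : {set 'I_n}) p :
  gamma a T * AT T p p =
  \sum_(j | j != p) (if (p \in T) && (j \in T) then gamma a T else 0).
Proof.
rewrite mxE andbb eqxx.
case: (boolP (p \in T)) => pT /=; last by rewrite mulr0 big1.
rewrite -big_mkcondr /= sumr_const.
have -> : #|T|%:R = (#|[pred j | (j != p) && (j \in T)]|.+1)%:R :> rat.
  congr (_%:R); rewrite (cardD1 p) pT add1n; congr (_.+1).
by rewrite -addn1 natrD addrK mulr_natr.
Qed.

Theorem mainTheorem5 (n : nat) (a : 'I_n -> puiseux) :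
  (2 <= n)%N ->
  (forall i j : 'I_n, i != j -> ~ pzero (psub (a i) (a j))) ->
  magic a = \sum_(T : {set 'I_n} | rameau a T) gamma a T *: AT T.
Proof.
move=> _ hd; apply/matrixP => p q.
rewrite !mxE summxE.
under eq_bigr => T _ do rewrite mxE.
case: (eqVneq p q) => [<-|pq].
  under eq_bigr => T _ do rewrite diag_term.
  rewrite exchange_big /mrow; apply: eq_bigr => j jp.
  by rewrite -big_mkcondr /= pair_sum // eq_sym.
have -> : \sum_(T | rameau a T) gamma a T * AT T p q =
          \sum_(T | rameau a T) (if (p \in T) && (q \in T) then - gamma a T else 0).
  apply: eq_bigr => T _; rewrite mxE (negPf pq).
  by case: ifP; rewrite ?mulrN1 ?mulr0.
by rewrite -big_mkcondr sumrN pair_sum.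
Qed.
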